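(* Let $B_0$ and $B_1$ be boards with $B_0\lessdot B_1$. If $B_0$ has a perfect layout, then $B_1$ also has a perfect layout.
   Context: A board is an $m\times n$ grid of unit cells in which exactly $c$ cells are sinks, one of each of $c$ colors, and all other cells are empty. A layout places, in some of the empty cells, arrows, each having one of the $c$ colors and one of the four cardinal directions. A packet of color $i$ may enter the grid through any unit edge of the outer boundary of the grid, into the adjacent cell, moving perpendicular to that edge into the grid; it moves one cell at a time in its current direction, and whenever it enters a cell containing an arrow of color $i$ its direction becomes that arrow's direction (arrows of other colors are ignored). The packet succeeds if it enters the sink of color $i$; it fails if it enters a sink of another color, leaves the grid, or travels forever without reaching a sink. A perfect layout is a layout in which every packet of every color entering through every boundary edge succeeds. For boards $B_0,B_1$, $B_0\lessdot B_1$ means that $B_0$ is obtained from $B_1$ by deleting a single row or column of $B_1$ that contains no sink. *)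

(* Defs.v *)
From mathcomp Require Import all_boot.
Set Implicit Arguments. Unset Strict Implicit. Unset Printing Implicit Defensive.

(* Cells are (row, column) pairs of naturals; row 0 is the top row,
   column 0 the leftmost column.  A cell p is in the m x n grid iff
   p.1 < m and p.2 < n. *)
Definition cell := (nat * nat)%type.

Inductive dir := North | East | South | West.

Definition in_grid (m n : nat) (p : cell) : bool := (p.1 < m) && (p.2 < n).

(* A board with c colors: sink k is the (unique) sink of color k. *)
Definition is_board (m n c : nat) (s : 'I_c -> cell) : Prop :=
  (forall k, in_grid m n (s k)) /\ injective s.

Definition is_sink (c : nat) (s : 'I_c -> cell) (p : cell) : bool :=
  [exists k : 'I_c, s k == p].

(* A layout: each cell holds possibly an arrow (color, direction). *)
Definition layout (c : nat) := cell -> option ('I_c * dir).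

Definition valid_layout (c : nat) (s : 'I_c -> cell) (L : layout c) : Prop :=
  forall k, L (s k) = None.

Definition move (p : cell) (d : dir) : option cell :=
  match d with
  | North => if p.1 is r.+1 then Some (r, p.2) else None
  | South => Some (p.1.+1, p.2)
  | East  => Some (p.1, p.2.+1)
  | West  => if p.2 is q.+1 then Some (p.1, q) else None
  end.

(* A packet state: the cell just entered and the current direction. *)
Definition state := (cell * dir)%type.

(* One step of a packet of color i that has just entered the (non-sink)
   cell st.1 moving in direction st.2: it turns if the cell holds an arrow
   of color i, then moves one cell; None means it leaves the grid. *)
Definition next (m n c : nat) (L : layout c) (i : 'I_c) (st : state)
  : option state :=
  let d' := match L st.1 with
            | Some (j, a) => if j == i then a else st.2
            | None => st.2
            end in
  match move st.1 d' with
  | Some q => if in_grid m n q then Some (q, d') else None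
  | None => None
  end.

(* run t st : the state after t moves, or None if the packet has stopped
   (entered a sink) or left the grid before that. *)
Fixpoint run (m n c : nat) (s : 'I_c -> cell) (L : layout c) (i : 'I_c)
  (t : nat) (st : state) : option state :=
  match t with
  | 0 => Some st
  | t'.+1 =>
      if is_sink s st.1 then None
      else match next m n L i st with
           | Some st' => run m n s L i t' st'
           | None => None
           end
  end.

(* The packet of color i entering with state st succeeds: it eventually
   enters the sink of color i (before entering any other sink / leaving). *)
Definition succeeds (m n c : nat) (s : 'I_c -> cell) (L : layout c)
  (i : 'I_c) (st : state) : Prop :=
  exists t d, run m n s L i t st = Some (s i, d).

(* Entering through a boundary unit edge: the packet enters the adjacent
   boundary cell p moving perpendicularly into the grid. *)
Definition boundary_entry (m n : nat) (p : cell) (d : dir) : bool :=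
  in_grid m n p &&
  match d with
  | East  => p.2 == 0
  | West  => p.2 == n.-1
  | South => p.1 == 0
  | North => p.1 == m.-1
  end.

Definition perfect_layout (m n c : nat) (s : 'I_c -> cell) (L : layout c)
  : Prop :=
  valid_layout s L /\
  forall (i : 'I_c) (p : cell) (d : dir),
    boundary_entry m n p d -> succeeds m n s L i (p, d).

Definition has_perfect_layout (m n c : nat) (s : 'I_c -> cell) : Prop :=
  exists L : layout c, perfect_layout m n s L.

(* B0 <. B1 : B0 (m0 x n0, sinks s0) is obtained from B1 (m1 x n1, sinks s1)
   by deleting a single row r or column q containing no sink. *)
Definition lessdot (m0 n0 c : nat) (s0 : 'I_c -> cell)
  (m1 n1 : nat) (s1 : 'I_c -> cell) : Prop :=
  (n0 = n1 /\ m1 = m0.+1 /\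
   exists2 r, r < m1 &
     forall k, (s1 k).1 != r /\ s0 k = (unbump r (s1 k).1, (s1 k).2))
  \/
  (m0 = m1 /\ n1 = n0.+1 /\
   exists2 q, q < n1 &
     forall k, (s1 k).2 != q /\ s0 k = ((s1 k).1, unbump q (s1 k).2)).

(* Main.v *)
Require Import Defs.
From Stdlib Require Import FunctionalExtensionality.
From mathcomp Require Import all_boot zify.
Set Implicit Arguments. Unset Strict Implicit. Unset Printing Implicit Defensive.

Definition turn c (L : layout c) (i : 'I_c) (q : cell) (d : dir) : dir :=
  match L q with Some (j, a) => if j == i then a else d | None => d end.

Lemma turn_idem c (L : layout c) i q d : turn L i q (turn L i q d) = turn L i q d.
Proof. rewrite /turn; case: (L q) => [[j a]|] //; by case: (j == i). Qed.

Lemma dnextE m n c (L : layout c) i q d : Defs.next m n L i (q, d) =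
  match move q (turn L i q d) with
  | Some q' => if in_grid m n q' then Some (q', turn L i q d) else None
  | None => None end.
Proof. by []. Qed.

Lemma run_S m n c s (L : layout c) i t st : run m n s L i t.+1 st =
  if is_sink s st.1 then None else
  match Defs.next m n L i st with Some st' => run m n s L i t st' | None => None end.
Proof. by []. Qed.

Lemma run_add m n c s (L : layout c) i k t st : run m n s L i (k + t) st =
  match run m n s L i k st with Some st' => run m n s L i t st' | None => None end.
Proof.
elim: k st => [|k IH] st //=.
case: (is_sink s st.1) => //; case: (Defs.next m n L i st) => // st'.
Qed.

Lemma unbump_lt r x : x < r -> unbump r x = x.
Proof. move=> h; rewrite /unbump; have -> : (r < x) = false by apply/negbTE; rewrite -leqNgt ltnW. by rewrite subn0. Qed.
Lemma unbump_gt r x : r < x -> unbump r x = x.-1.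
Proof. by move=> h; rewrite /unbump h subn1. Qed.

Section Row.
Variables (m0 n c : nat) (s0 s1 : 'I_c -> cell) (r : nat) (L0 : layout c).
Hypothesis Hm0 : 0 < m0.
Hypothesis Hr : r <= m0.
Hypothesis Hs : forall k, (s1 k).1 != r /\ s0 k = (unbump r (s1 k).1, (s1 k).2).

Definition ra := if r < m0 then r else r.-1.
Definition tw := if r < m0 then r.+1 else r.-1.
Definition sd := if r < m0 then South else North.
Definition phi (p : cell) : cell := (if p.1 == r then ra else unbump r p.1, p.2).
Definition L1 : layout c := fun p =>
  if p.1 == r then
    (if [pick k | s0 k == phi p] is Some k then Some (k, sd) else L0 (phi p))
  else L0 (phi p).

Lemma phi_s1 k : phi (s1 k) = s0 k.
Proof. by case: (Hs k) => /negbTE h ->; rewrite /phi h. Qed.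

Lemma phi_inj p q : p.1 != r -> q.1 != r -> phi p = phi q -> p = q.
Proof.
case: p q => [x y] [x' y'] /= /negbTE hx /negbTE hx'; rewrite /phi /= hx hx'.
case=> e ->; congr (_, _).
by rewrite -[x](unbumpK (h:=r)) ?inE ?hx // e unbumpK // inE hx'.
Qed.

Lemma sink1_off p : p.1 != r -> is_sink s1 p = is_sink s0 (phi p).
Proof.
move=> hp; apply/existsP/existsP => [[k /eqP <-]|[k /eqP hk]].
  by exists k; rewrite phi_s1.
exists k; apply/eqP; apply: phi_inj => //; first by case: (Hs k).
by rewrite phi_s1.
Qed.

Lemma sink1_row p : p.1 == r -> is_sink s1 p = false.
Proof.
move=> /eqP hp; apply/negbTE/existsP => [[k /eqP hk]].
by case: (Hs k); rewrite hk hp eqxx.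
Qed.

Lemma sink1_phi p : is_sink s1 p -> is_sink s0 (phi p).
Proof.
case: (boolP (p.1 == r)) => h; first by rewrite sink1_row.
by rewrite sink1_off.
Qed.

Lemma L1_ns p : ~~ is_sink s0 (phi p) -> L1 p = L0 (phi p).
Proof.
move=> hns; rewrite /L1; case: (p.1 == r) => //.
case: pickP => // k /eqP hk; case/negP: hns; apply/existsP; exists k; exact/eqP.
Qed.

Lemma grid_phi p : in_grid m0.+1 n p = in_grid m0 n (phi p).
Proof.
case: p => [x y]; rewrite /in_grid /phi /=; congr (_ && _).
case: eqP => [->|/eqP hx]; first by rewrite /ra; case: ifP => h; lia.
case: (ltngtP x r) => h; first by rewrite unbump_lt //; lia.
  by rewrite unbump_gt //; lia.
by move: hx; rewrite h eqxx.
Qed.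


Lemma phi_off x y : x != r -> phi (x, y) = (unbump r x, y).
Proof. by move=> /negbTE h; rewrite /phi /= h. Qed.
Lemma phi_on y : phi (r, y) = (ra, y).
Proof. by rewrite /phi /= eqxx. Qed.

Variable i : 'I_c.
Notation run1 := (run m0.+1 n s1 L1 i).
Notation run0 := (run m0 n s0 L0 i).

Lemma run1_1 q d : ~~ is_sink s0 (phi q) -> run1 1 (q, d) =
  match move q (turn L0 i (phi q) d) with
  | Some q' => if in_grid m0.+1 n q' then Some (q', turn L0 i (phi q) d) else None
  | None => None end.
Proof.
move=> hns; rewrite run_S /=.
have -> : is_sink s1 q = false.
  by apply/negbTE; apply: contra hns; apply: sink1_phi.
rewrite dnextE /turn L1_ns // -/(turn L0 i (phi q) d).
case: (move q _) => // q'; by case: (in_grid _ _ _).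
Qed.

Definition simgoal p d e :=
  exists k, match (match move (phi p) e with
     | Some q0 => if in_grid m0 n q0 then Some (q0, e) else None
     | None => None end) with
  | None => run1 k (p, d) = None
  | Some (q0, e') => exists q, run1 k (p, d) = Some (q, e') /\ phi q = q0 /\ in_grid m0.+1 n q
  end.

Lemma close_direct p d e :
  run1 1 (p, d) = match move p e with
  | Some q' => if in_grid m0.+1 n q' then Some (q', e) else None
  | None => None end ->
  (move p e = None /\ move (phi p) e = None) \/
  (exists q, move p e = Some q /\ move (phi p) e = Some (phi q)) ->
  simgoal p d e.
Proof.
move=> h1 H; rewrite /simgoal; case: H => [[hm ->]|[q [hq ->]]]; exists 1; rewrite h1 ?hm //.
rewrite hq grid_phi; case: ifP => // hg; by exists q; rewrite grid_phi.
Qed.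

Lemma close_stutter p d e q :
  run1 1 (p, d) = match move p e with
  | Some q' => if in_grid m0.+1 n q' then Some (q', e) else None
  | None => None end ->
  ~~ is_sink s0 (phi p) -> e = turn L0 i (phi p) d ->
  move p e = Some q -> in_grid m0.+1 n q -> phi q = phi p ->
  (move q e = None /\ move (phi p) e = None) \/
  (exists q', move q e = Some q' /\ move (phi p) e = Some (phi q')) ->
  simgoal p d e.
Proof.
move=> h1 hns he hm hg hph H; rewrite /simgoal; exists 2.
have he' : turn L0 i (phi p) e = e by rewrite he turn_idem.
rewrite (run_add _ _ _ _ _ 1 1) h1 hm hg run1_1 hph // he'.
case: H => [[-> ->]|[q' [-> ->]]] //.
rewrite grid_phi; case: ifP => // hg'; by exists q'; rewrite grid_phi.
Qed.

Lemma north_same z y : z <= r ->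
  (move (z, y) North = None /\ move (z, y) North = None) \/
  (exists q', move (z, y) North = Some q' /\ move (z, y) North = Some (phi q')).
Proof.
case: z => [|z] hz; first by left.
right; exists (z, y); split => //; rewrite phi_off ?unbump_lt //; lia.
Qed.


Lemma phi_lt x y : x < r -> phi (x, y) = (x, y).
Proof. move=> h; rewrite phi_off ?unbump_lt //; lia. Qed.
Lemma phi_gt x y : r < x -> phi (x, y) = (x.-1, y).
Proof. move=> h; rewrite phi_off ?unbump_gt //; lia. Qed.
Lemma ra_lt : r < m0 -> ra = r.
Proof. by rewrite /ra => ->. Qed.
Lemma ra_eq : r = m0 -> ra = r.-1.
Proof. by rewrite /ra => ->; rewrite ltnn. Qed.
Lemma moveN_pos x y : 0 < x -> move (x, y) North = Some (x.-1, y).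
Proof. by case: x. Qed.

Lemma bound_phi p d : boundary_entry m0.+1 n p d -> boundary_entry m0 n (phi p) d.
Proof.
case: p => x y; rewrite /boundary_entry grid_phi => /andP [hg hb]; rewrite hg.
case: d hb => //= /eqP hx; subst x.
  have hrm : r < m0 \/ r = m0 by lia.
  case: hrm => hrm.
    have -> : (m0 == r) = false by apply/eqP; lia.
    by rewrite unbump_gt.
  by rewrite (ra_eq hrm) -hrm eqxx.
case: (ltngtP 0 r) => h.
  by rewrite unbump_lt.
  by [].
by rewrite /ra -h Hm0.
Qed.

Lemma step_sim p d : in_grid m0.+1 n p -> ~~ is_sink s0 (phi p) ->
  simgoal p d (turn L0 i (phi p) d).
Proof.
move=> hg hns; have h1 := run1_1 d hns.
have hst := close_stutter h1 hns erefl.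
have hdir := close_direct h1.
move: hst hdir; set e := turn L0 i (phi p) d; clearbody e => hst hdir.
case: p hg hns h1 hst hdir => x y /andP [/= hx hy] hns h1 hst hdir; clear h1.
have hrm : r < m0 \/ r = m0 by lia.
case: e hst hdir => hst hdir.
-
  case: x hx hns hst hdir => [|x] hx hns hst hdir.
    apply: hdir; left; split => //.
    have -> : phi (0, y) = (0, y).
      case: (ltngtP 0 r) => h; first by rewrite phi_lt.
        by [].
      by rewrite /phi /= -h eqxx /ra -h Hm0.
    by [].
  case: (ltngtP x.+1 r) => hxr.
  + apply: hdir; right; exists (x, y).
    rewrite (@phi_lt x.+1 y) // (@phi_lt x y) //; lia.
  + case: (ltngtP x r) => hxr'.
    * lia.
    * have e1 : phi (x.+1, y) = (x, y) by rewrite phi_gt.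
      apply: hdir; right; exists (x, y); rewrite e1 phi_gt //; split => //; rewrite moveN_pos //; lia.
    * subst x; case: hrm => hrm.
        have e1 : phi (r.+1, y) = (r, y) by rewrite phi_gt.
        apply: (hst (r, y)) => //.
          by rewrite /in_grid /= hy andbT; lia.
          by rewrite e1 phi_on ra_lt.
        by rewrite e1; apply: north_same; lia.
      lia.
  + case: hrm => hrm.
      have e1 : phi (x.+1, y) = (x.+1, y) by rewrite hxr phi_on ra_lt.
      apply: hdir; right; exists (x, y); rewrite e1 phi_lt //; lia.
    have e1 : phi (x.+1, y) = (x, y) by rewrite hxr phi_on ra_eq // -hxr.
    apply: (hst (x, y)) => //.
        by rewrite /in_grid /= hy andbT; lia.
      by rewrite e1 phi_lt //; lia.
    by rewrite e1; apply: north_same; lia.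
-
  by apply: hdir; right; exists (x, y.+1).
-
  case: (ltngtP x r) => hxr.
  + case: (ltngtP x.+1 r) => hxr'.
    * apply: hdir; right; exists (x.+1, y).
      by rewrite phi_lt // phi_lt //; lia.
    * lia.
    * case: hrm => hrm.
        apply: hdir; right; exists (x.+1, y).
        have e1 : phi (x.+1, y) = (x.+1, y) by rewrite hxr' phi_on ra_lt.
        by rewrite phi_lt // e1.
      have e1 : phi (x, y) = (x, y) by rewrite phi_lt.
      apply: (hst (x.+1, y)) => //.
          by rewrite /in_grid /= hy andbT; lia.
        by rewrite e1 hxr' phi_on ra_eq // -hxr'.
      right; exists (x.+2, y); split => //.
      by rewrite e1 phi_gt //; lia.
  + apply: hdir; right; exists (x.+1, y).
    rewrite !phi_gt //=; try lia; split => //; congr (Some (_, _)); lia.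
  + subst x; case: hrm => hrm.
      have e1 : phi (r, y) = (r, y) by rewrite phi_on ra_lt.
      apply: (hst (r.+1, y)) => //.
          by rewrite /in_grid /= hy andbT; lia.
        by rewrite e1 phi_gt.
      right; exists (r.+2, y); split => //.
      by rewrite e1 phi_gt.
    apply: hdir; right; exists (r.+1, y).
    by rewrite phi_on ra_eq // phi_gt //= prednK //; lia.
-
  case: y hy hns hst hdir => [|y] hy hns hst hdir.
    by apply: hdir; left.
  by apply: hdir; right; exists (x, y).
Qed.


Hypothesis Hinj : injective s0.

Lemma sim t p d e : in_grid m0.+1 n p -> run0 t (phi p, d) = Some (s0 i, e) ->
  exists t' e', run1 t' (p, d) = Some (s1 i, e').
Proof.
elim: t p d => [|t IH] p d hg /=.
  case=> hp _; case: (boolP (p.1 == r)) => hr; last first.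
    exists 0, d; congr (Some (_, _)); apply: phi_inj => //; first by case: (Hs i).
    by rewrite phi_s1.
  have hL : L1 p = Some (i, sd).
    rewrite /L1 hr; case: pickP => [k /eqP hk|none].
      by rewrite (Hinj (etrans hk hp)).
    by move: (none i); rewrite hp eqxx.
  exists 1, sd; rewrite run_S sink1_row // dnextE /turn hL eqxx.
  have hg1 : in_grid m0.+1 n (s1 i) by rewrite grid_phi phi_s1 -hp -grid_phi.
  case: p hg hp hr hL => x y hg hp /= /eqP hr hL; subst x.
  have hrm : r < m0 \/ r = m0 by lia.
  case: hrm => hrm.
    rewrite /sd hrm /=.
    have -> : (r.+1, y) = s1 i.
      apply: phi_inj => //=; first by lia.
        by case: (Hs i).
      by rewrite phi_s1 -hp phi_gt // phi_on ra_lt.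
    by rewrite hg1.
  have -> : move (r, y) sd = Some (s1 i).
    rewrite /sd hrm ltnn moveN_pos; last by lia.
    congr Some; apply: phi_inj => //=; first by lia.
      by case: (Hs i).
    by rewrite phi_s1 -hp phi_on ra_eq // phi_lt ?hrm //; lia.
  by rewrite hg1.
rewrite dnextE; case: ifP => // hns.
have [k hk] := step_sim d hg (negbT hns).
move: hk; case: (move (phi p) _) => [q0|] //; case: ifP => // _.
move=> [q [hq [hphi hgq]]] H; rewrite -hphi in H.
have [t' [e' ht']] := IH _ _ hgq H.
by exists (k + t'), e'; rewrite run_add hq.
Qed.

End Row.

Lemma row_case m0 n c (s0 s1 : 'I_c -> cell) r :
  is_board m0 n s0 -> r <= m0 ->
  (forall k, (s1 k).1 != r /\ s0 k = (unbump r (s1 k).1, (s1 k).2)) ->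
  has_perfect_layout m0 n s0 -> has_perfect_layout m0.+1 n s1.
Proof.
move=> [hin hinj] hr hs [L0 [hval hperf]].
case: (posnP m0) => hm0.
  exists (fun _ => None); split => // i.
  by move: (hin i); rewrite hm0 /in_grid.
exists (L1 m0 s0 r L0); split.
  move=> k; rewrite /L1; case: (hs k) => /negbTE -> _.
  by rewrite (phi_s1 _ hs) hval.
move=> i p d hb.
have [t [e ht]] := hperf i _ _ (bound_phi hm0 hr hb).
case/andP: hb => hg _.
exact: (sim hm0 hr hs hinj hg ht).
Qed.
From Stdlib Require Import FunctionalExtensionality.

Definition swapc (p : cell) : cell := (p.2, p.1).
Definition trd (d : dir) : dir :=
  match d with North => West | West => North | South => East | East => South end.
Definition Ltr c (L : layout c) : layout c := fun q =>
  match L (swapc q) with Some (j, a) => Some (j, trd a) | None => None end.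
Definition str c (s : 'I_c -> cell) : 'I_c -> cell := fun k => swapc (s k).

Lemma swapcK p : swapc (swapc p) = p. Proof. by case: p. Qed.
Lemma trdK d : trd (trd d) = d. Proof. by case: d. Qed.

Lemma move_tr p d : move (swapc p) (trd d) = omap swapc (move p d).
Proof. by case: p => [[|x] [|y]]; case: d. Qed.

Lemma grid_tr m n p : in_grid n m (swapc p) = in_grid m n p.
Proof. by rewrite /in_grid andbC. Qed.

Lemma sink_tr c (s : 'I_c -> cell) p : is_sink (str s) (swapc p) = is_sink s p.
Proof.
apply/existsP/existsP => [[k /eqP hk]|[k /eqP hk]]; exists k; apply/eqP.
  by rewrite -(swapcK (s k)) -(swapcK p); congr swapc.
by rewrite /str hk.
Qed.

Lemma turn_tr c (L : layout c) i q d : turn (Ltr L) i (swapc q) (trd d) = trd (turn L i q d).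
Proof. rewrite /turn /Ltr swapcK; case: (L q) => [[j a]|] //; by case: (j == i). Qed.

Lemma run_tr m n c (s : 'I_c -> cell) L i t st :
  run n m (str s) (Ltr L) i t (swapc st.1, trd st.2) =
  omap (fun st => (swapc st.1, trd st.2)) (run m n s L i t st).
Proof.
elim: t st => [|t IH] [q d] //.
rewrite !run_S /= sink_tr; case: (is_sink s q) => //.
rewrite !dnextE turn_tr move_tr; case: (move q _) => [q'|] //=.
rewrite grid_tr; case: (in_grid m n q') => //.
exact: IH (q', _).
Qed.

Lemma bound_tr m n p d : boundary_entry n m (swapc p) (trd d) = boundary_entry m n p d.
Proof. by rewrite /boundary_entry grid_tr; case: d. Qed.

Lemma perfect_tr m n c (s : 'I_c -> cell) :
  has_perfect_layout m n s -> has_perfect_layout n m (str s).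
Proof.
move=> [L [hv hp]]; exists (Ltr L); split.
  by move=> k; rewrite /Ltr /str swapcK hv.
move=> i p d hb.
have hb' : boundary_entry m n (swapc p) (trd d) by rewrite -bound_tr swapcK trdK.
have [t [e ht]] := hp i _ _ hb'.
exists t, (trd e); move: (run_tr m n s L i t (swapc p, trd d)); rewrite ht /= swapcK trdK.
by [].
Qed.

Lemma board_tr m n c (s : 'I_c -> cell) : is_board m n s -> is_board n m (str s).
Proof.
move=> [hg hi]; split; first by move=> k; rewrite /str grid_tr.
by move=> k k' h; apply: hi; rewrite -(swapcK (s k)) -(swapcK (s k')); congr swapc.
Qed.

Theorem mainTheorem15 (c m0 n0 m1 n1 : nat) (s0 s1 : 'I_c -> cell) :
  is_board m0 n0 s0 -> is_board m1 n1 s1 ->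
  lessdot m0 n0 s0 m1 n1 s1 ->
  has_perfect_layout m0 n0 s0 -> has_perfect_layout m1 n1 s1.
Proof.
move=> hb0 _ [[hn [hm [r hr hs]]]|[hm [hn [q hq hs]]]] hp; subst.
  apply: (row_case hb0 _ hs hp); lia.
have hq' : q <= n0 by lia.
have hs' : forall k, (str s1 k).1 != q /\ str s0 k = (unbump q (str s1 k).1, (str s1 k).2).
  by move=> k; case: (hs k) => h1 h2; split => //; rewrite /str h2.
have := perfect_tr (row_case (board_tr hb0) hq' hs' (perfect_tr hp)); rewrite /str.
have -> : (fun k => swapc (swapc (s1 k))) = s1.
  by apply: functional_extensionality => k; rewrite swapcK.
by [].
Qed.
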